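(* Let $m,n\ge2$. If $f\in\operatorname{vert}(\Diamond_m,\Diamond_n)$ and $f(0)$ lies in the interior of $\Diamond_n$, then $f(0)=0$.
   Context: For convex polytopes $P,Q$, $\operatorname{Hom}(P,Q)$ is the set of maps $P\to Q$ that are restrictions of affine maps $\operatorname{Aff}(P)\to\operatorname{Aff}(Q)$; it is a convex polytope in the affine space of affine maps $\operatorname{Aff}(P)\to\operatorname{Aff}(Q)$, and $\operatorname{vert}(P,Q)$ denotes its set of vertices. $\Diamond_n=\operatorname{conv}(\pm e_1,\ldots,\pm e_n)\subset\mathbb{R}^n$ is the $n$-dimensional crosspolytope. *)

(* Defs.v *)
From HB Require Import structures.
From mathcomp Require Import all_boot all_order all_algebra.
From mathcomp Require Import reals.
Set Implicit Arguments. Unset Strict Implicit. Unset Printing Implicit Defensive.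
Import Order.TTheory GRing.Theory Num.Theory.
Local Open Scope ring_scope.

Section Defs.
Variable R : realType.

Definition unitvec (n : nat) (i : 'I_n) : 'cV[R]_n := delta_mx i 0.

(* x lies in the crosspolytope conv(±e_1,...,±e_n): an explicit convex combination *)
Definition in_cross (n : nat) (x : 'cV[R]_n) : Prop :=
  exists (lp ln : 'I_n -> R),
    (forall i, 0 <= lp i) /\ (forall i, 0 <= ln i) /\
    \sum_(i < n) (lp i + ln i) = 1 /\
    x = \sum_(i < n) (lp i *: unitvec i + ln i *: (- unitvec i)).

(* topological interior in R^n (product topology: sup-norm ball) *)
Definition in_cross_interior (n : nat) (x : 'cV[R]_n) : Prop :=
  exists e : R, 0 < e /\
    forall y : 'cV[R]_n, (forall i, `|y i 0 - x i 0| < e) -> in_cross y.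

(* The affine map x |-> A x + b (Aff(Diamond_m) = R^m) lies in Hom(Diamond_m, Diamond_n) *)
Definition in_hom (m n : nat) (A : 'M[R]_(n, m)) (b : 'cV[R]_n) : Prop :=
  forall x : 'cV[R]_m, in_cross x -> in_cross (A *m x + b).

Definition is_vert_hom (m n : nat) (A : 'M[R]_(n, m)) (b : 'cV[R]_n) : Prop :=
  in_hom A b /\
  forall (A1 A2 : 'M[R]_(n, m)) (b1 b2 : 'cV[R]_n) (t : R),
    in_hom A1 b1 -> in_hom A2 b2 -> 0 < t -> t < 1 ->
    A = t *: A1 + (1 - t) *: A2 -> b = t *: b1 + (1 - t) *: b2 ->
    A1 = A2 /\ b1 = b2.

End Defs.

(* Main.v *)
Require Import Defs.
From HB Require Import structures.
From mathcomp Require Import all_boot all_order all_algebra.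
From mathcomp Require Import reals.
From mathcomp Require Import ring lra.
Import Order.TTheory GRing.Theory Num.Theory.
Local Open Scope ring_scope.
Set Implicit Arguments. Unset Strict Implicit.
Lemma absE (R : realDomainType) (a : R) : (0 <= a /\ `|a| = a) \/ (a < 0 /\ `|a| = -a).
Proof. case: (lerP 0 a) => h; [left; split=> //; exact: ger0_norm | right; split=> //; exact: ltr0_norm]. Qed.

Lemma scal (R : realFieldType) (a c d z : R) :
 -1 <= d -> (0 <= d -> 0 <= z /\ z <= (`|a| + `|c| - `|a + c|)/2) -> (d <= 0 -> z <= 0) ->
 ((`|a| + `|c| - `|a + c|) = 0 -> z = 0) ->
 `|a + d * a - (if (0 < a) && (c < 0) then z else if (a < 0) && (0 < c) then -z else 0)|
    <= (1 + d) * `|a| - z /\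
 `|c + d * c + (if (0 < a) && (c < 0) then z else if (a < 0) && (0 < c) then -z else 0)|
    <= (1 + d) * `|c| - z.
Proof.
move=> h1 h2 h3 h4.
have [[Hac Nac]|[Hac Nac]] := @absE _ (a + c);
case: (ltrgtP a 0) => Ha; case: (ltrgtP c 0) => Hc /=;
rewrite ?Nac ?(ltr0_norm Ha) ?(gtr0_norm Ha) ?(ltr0_norm Hc) ?(gtr0_norm Hc) ?Ha ?Hc ?normr0 in h2 h4 *;
split; rewrite ler_norml; apply/andP; split; nra.
Qed.

Section Col.
Variables (R : realFieldType) (n : nat) (p q : 'I_n -> R).
Definition nrm (f : 'I_n -> R) := \sum_k `|f k|.
Definition hk k := (`|p k| + `|q k| - `|p k + q k|) / 2.
Definition Mc := \sum_k hk k.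
Definition gk k := hk k / Mc.
Definition wk k := if (0 < p k) && (q k < 0) then gk k
  else if (p k < 0) && (0 < q k) then - gk k else 0.
Definition eps_col := if nrm p < 1 then (1 - nrm p) / 2
  else if nrm q < 1 then (1 - nrm q) / 2 else Num.min Mc 1.
Definition u_col k := if nrm p < 1 then p k + q k else if nrm q < 1 then 0 else p k - wk k.
Definition v_col k := if nrm p < 1 then 0 else if nrm q < 1 then p k + q k else q k + wk k.

Lemma hk_ge0 k : 0 <= hk k.
Proof. rewrite /hk divr_ge0 // subr_ge0; exact: ler_normD. Qed.

Lemma col_ok : nrm p <= 1 -> nrm q <= 1 -> \sum_k `|p k + q k| < 2 ->
  0 < eps_col /\ (forall k, u_col k + v_col k = p k + q k) /\
  forall d, `|d| <= eps_col ->
    \sum_k `|p k + d * u_col k| <= 1 /\ \sum_k `|q k + d * v_col k| <= 1.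
Proof.
move=> Hp Hq Hpq.
rewrite /eps_col /u_col /v_col.
case: ifP => Hp1.
  split; first by lra.
  split; first by move=> k; rewrite addr0.
  move=> d Hd; split; last by under eq_bigr do rewrite mulr0 addr0.
  have Hs : \sum_k `|p k + d * (p k + q k)| <= nrm p + `|d| * 2.
    rewrite /nrm.
    apply: le_trans (_ : \sum_k (`|p k| + `|d| * `|p k + q k|) <= _).
      by apply: ler_sum => k _; rewrite -normrM; apply: ler_normD.
    rewrite big_split /= -mulr_sumr lerD2l ler_wpM2l //.
    exact: ltW Hpq.
  by apply: le_trans Hs _; lra.
case: ifP => Hq1.
  split; first by lra.
  split; first by move=> k; rewrite add0r.
  move=> d Hd; split; first by under eq_bigr do rewrite mulr0 addr0.
  have Hs : \sum_k `|q k + d * (p k + q k)| <= nrm q + `|d| * 2.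
    rewrite /nrm.
    apply: le_trans (_ : \sum_k (`|q k| + `|d| * `|p k + q k|) <= _).
      by apply: ler_sum => k _; rewrite -normrM; apply: ler_normD.
    rewrite big_split /= -mulr_sumr lerD2l ler_wpM2l //.
    exact: ltW Hpq.
  by apply: le_trans Hs _; lra.
have Ep : nrm p = 1 by move/negbT: Hp1; rewrite -leNgt => ?; lra.
have Eq : nrm q = 1 by move/negbT: Hq1; rewrite -leNgt => ?; lra.
have EM : Mc = (nrm p + nrm q - \sum_k `|p k + q k|) / 2.
  by rewrite /Mc /hk -mulr_suml /nrm !sumrB -big_split.
have HM : 0 < Mc by rewrite EM Ep Eq; lra.
have Hg : \sum_k gk k = 1 by rewrite /gk -mulr_suml -/Mc divff // gt_eqF.
split; first by rewrite lt_min HM ltr01.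
split; first by move=> k; rewrite addrACA addNr addr0.
move=> d; rewrite le_min => /andP[Hd1 Hd2].
have [Hd3 Hd4] : -1 <= d /\ d <= Mc.
  by move: (ler_norm d) (ler_normr d) Hd1 Hd2; rewrite ?ler_normr ?ler_norml; lra.
have key : forall k, `|p k + d * (p k - wk k)| <= (1 + d) * `|p k| - d * gk k /\
                     `|q k + d * (q k + wk k)| <= (1 + d) * `|q k| - d * gk k.
  move=> k.
  have E : d * wk k = (if (0 < p k) && (q k < 0) then d * gk k
        else if (p k < 0) && (0 < q k) then - (d * gk k) else 0).
    by rewrite /wk; case: ifP => _; [|case: ifP => _]; rewrite ?mulrN ?mulr0.
  rewrite !mulrDr mulrN !addrA E.
  have Hgk : 0 <= gk k by rewrite /gk divr_ge0 // ?hk_ge0 // ltW.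
  apply: scal => //.
  - move=> H0; split; first exact: mulr_ge0.
    apply: le_trans (_ : Mc * gk k <= _); first exact: ler_wpM2r.
    by rewrite /gk mulrC divfK ?gt_eqF.
  - by move=> H0; apply: mulr_le0_ge0.
  - by move=> H0; rewrite /gk /hk H0 mul0r mul0r mulr0.
have sumk : forall f : 'I_n -> R, \sum_k ((1 + d) * `|f k| - d * gk k) = (1 + d) * nrm f - d.
  by move=> f; rewrite sumrB -!mulr_sumr Hg mulr1.
split.
  apply: le_trans (_ : \sum_k ((1 + d) * `|p k| - d * gk k) <= _).
    by apply: ler_sum => k _; case: (key k).
  by rewrite sumk Ep; lra.
apply: le_trans (_ : \sum_k ((1 + d) * `|q k| - d * gk k) <= _).
  by apply: ler_sum => k _; case: (key k).
by rewrite sumk Eq; lra.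
Qed.
End Col.

Section Mat.
Variable R : realType.

Lemma unitvecE n (i k : 'I_n) : unitvec R i k 0 = (k == i)%:R.
Proof. by rewrite /unitvec mxE eqxx andbT. Qed.

Lemma cross_coord n (lp ln : 'I_n -> R) k :
  (\sum_(i < n) (lp i *: unitvec R i + ln i *: (- unitvec R i))) k 0 = lp k - ln k.
Proof.
rewrite summxE (bigD1 k) //= /unitvec !mxE !eqxx /= mulr1 mulrN1 big1 ?addr0 // => i Hi.
by rewrite !mxE eq_sym (negbTE Hi) /= mulr0 oppr0 mulr0 addr0.
Qed.

Lemma cross_nrm n (x : 'cV[R]_n) : in_cross x -> \sum_k `|x k 0| <= 1.
Proof.
case=> lp [ln [H1 [H2 [H3 ->]]]]; rewrite -H3.
apply: ler_sum => k _; rewrite cross_coord.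
apply: le_trans (ler_normB _ _) _.
by rewrite !ger0_norm.
Qed.

Lemma maxE (a : R) : (if 0 <= a then a else 0) - (if 0 <= a then 0 else - a) = a /\
   (if 0 <= a then a else 0) + (if 0 <= a then 0 else - a) = `|a|.
Proof.
case: (lerP 0 a) => h.
  by rewrite (ger0_norm h) subr0 addr0.
by rewrite (ltr0_norm h) sub0r opprK add0r.
Qed.

Lemma nrm_cross n (x : 'cV[R]_n) : (0 < n)%N -> \sum_k `|x k 0| <= 1 -> in_cross x.
Proof.
move=> n0 HS; set S := \sum_k `|x k 0|.
set s := (1 - S) / (2 * n%:R).
have n0' : 0 < n%:R :> R by rewrite ltr0n.
have s0 : 0 <= s by rewrite /s divr_ge0 // ?subr_ge0 // mulr_ge0 // ltW.
exists (fun k => (if 0 <= x k 0 then x k 0 else 0) + s), (fun k => (if 0 <= x k 0 then 0 else - x k 0) + s).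
split; first by move=> i; rewrite addr_ge0 //; case: (lerP 0 (x i 0)) => // h; lra.
split; first by move=> i; rewrite addr_ge0 //; case: (lerP 0 (x i 0)) => // h; lra.
split.
  have -> : \sum_(i < n) ((if 0 <= x i 0 then x i 0 else 0) + s + ((if 0 <= x i 0 then 0 else - x i 0) + s)) =
            \sum_(i < n) (`|x i 0| + s *+ 2).
    apply: eq_bigr => i _; rewrite addrACA -(proj2 (maxE (x i 0))).
    by rewrite mulr2n.
  rewrite big_split /= sumr_const card_ord -mulrnA /s -/S.
  rewrite -[_ *+ (2 * n)]mulr_natr natrM divfK; first by rewrite addrC subrK.
  by rewrite mulf_neq0 // gt_eqF.
apply/matrixP => k j; rewrite (ord1 j) cross_coord.
by rewrite opprD addrACA subrr addr0 (proj1 (maxE _)).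
Qed.

Lemma hom_of_cols n m (A : 'M[R]_(n, m)) (b : 'cV[R]_n) : (0 < n)%N ->
  (forall j, \sum_k `|b k 0 + A k j| <= 1 /\ \sum_k `|b k 0 - A k j| <= 1) ->
  in_hom A b.
Proof.
move=> n0 H x Hx; apply: nrm_cross => //.
case: Hx => lp [ln [H1 [H2 [H3 Hx]]]].
have E : forall k, (A *m x + b) k 0 =
    \sum_i (lp i * (b k 0 + A k i) + ln i * (b k 0 - A k i)).
  move=> k; rewrite !mxE.
  have -> : \sum_i (lp i * (b k 0 + A k i) + ln i * (b k 0 - A k i)) =
     \sum_i ((lp i + ln i) * b k 0) + \sum_i A k i * (lp i - ln i).
    by rewrite -big_split; apply: eq_bigr => i _ /=; ring.
  rewrite -mulr_suml H3 mul1r addrC; congr (_ + _); apply: eq_bigr => i _.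
  by rewrite Hx cross_coord.
apply: le_trans (_ : \sum_k \sum_i (lp i * `|b k 0 + A k i| + ln i * `|b k 0 - A k i|) <= _).
  apply: ler_sum => k _; rewrite E; apply: le_trans (ler_norm_sum _ _ _) _.
  apply: ler_sum => i _; apply: le_trans (ler_normD _ _) _.
  by rewrite !normrM (ger0_norm (H1 i)) (ger0_norm (H2 i)).
rewrite exchange_big /= -H3; apply: ler_sum => i _.
rewrite big_split /= -!mulr_sumr; apply: lerD; rewrite -[X in _ <= X]mulr1;
  apply: ler_wpM2l => //; [exact: (H i).1 | exact: (H i).2].
Qed.

Lemma cols_of_hom n m (A : 'M[R]_(n, m)) (b : 'cV[R]_n) j : in_hom A b ->
  \sum_k `|b k 0 + A k j| <= 1 /\ \sum_k `|b k 0 - A k j| <= 1.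
Proof.
move=> H.
have Hs : \sum_(i < m) (((i == j)%:R : R) + 0) = 1.
  under eq_bigr do rewrite addr0.
  by rewrite (bigD1 j) //= eqxx big1 ?addr0 // => i /negbTE ->.
have Hs' : \sum_(i < m) ((0 : R) + (i == j)%:R) = 1.
  under eq_bigr do rewrite add0r.
  by rewrite (bigD1 j) //= eqxx big1 ?addr0 // => i /negbTE ->.
have C1 : in_cross (unitvec R j).
  exists (fun i => (i == j)%:R), (fun _ => 0); split; first by move=> i; exact: ler0n.
  split; first by move=> i; exact: lexx.
  split => //; apply/matrixP => k l; rewrite (ord1 l) cross_coord subr0.
  by rewrite /unitvec !mxE !eqxx andbT.
have C2 : in_cross (- unitvec R j).
  exists (fun _ => 0), (fun i => (i == j)%:R); split; first by move=> i; exact: lexx.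
  split; first by move=> i; exact: ler0n.
  split => //; apply/matrixP => k l; rewrite (ord1 l) cross_coord sub0r.
  by rewrite /unitvec !mxE !eqxx andbT.
have E1 : forall k, (A *m unitvec R j + b) k 0 = b k 0 + A k j.
  move=> k; rewrite /unitvec !mxE (bigD1 j) //= !mxE !eqxx /= mulr1 big1 ?addr0.
    by rewrite addrC.
  by move=> i /negbTE Hi; rewrite mxE Hi mulr0.
have E2 : forall k, (A *m - unitvec R j + b) k 0 = b k 0 - A k j.
  move=> k; rewrite /unitvec !mxE (bigD1 j) //= !mxE !eqxx /= mulrN1 big1 ?addr0.
    by rewrite addrC.
  by move=> i /negbTE Hi; rewrite !mxE Hi oppr0 mulr0.
split.
  by under eq_bigr do rewrite -E1; apply: cross_nrm; apply: H.
by under eq_bigr do rewrite -E2; apply: cross_nrm; apply: H.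
Qed.

Lemma int_nrm n (b : 'cV[R]_n) : in_cross_interior b -> \sum_k `|b k 0| < 1.
Proof.
case=> e [e0 He]; set S := \sum_k `|b k 0|.
have S0 : 0 <= S by apply: sumr_ge0.
set d := e / (S + 1).
have S1 : 0 < S + 1 by lra.
have d0 : 0 < d by rewrite divr_gt0.
have dS : d * (S + 1) = e by rewrite /d divfK // gt_eqF.
have Hy := He ((1 + d) *: b).
have /cross_nrm : in_cross ((1 + d) *: b).
  apply: Hy => i; rewrite !mxE mulrDl mul1r addrAC subrr add0r normrM (gtr0_norm d0).
  have bi : `|b i 0| <= S by rewrite /S (bigD1 i) //= lerDl sumr_ge0.
  have : d * `|b i 0| <= d * S by apply: ler_wpM2l => //; exact: ltW.
  nra.
under eq_bigr do rewrite mxE normrM.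
rewrite -mulr_sumr -/S (gtr0_norm (_ : 0 < 1 + d)); last by lra.
nra.
Qed.

End Mat.

Unset Implicit Arguments.

Theorem theorem6p1 (R : realType) (m n : nat) (hm : (2 <= m)%N) (hn : (2 <= n)%N)
  (A : 'M[R]_(n, m)) (b : 'cV[R]_n) :
  is_vert_hom A b -> in_cross_interior b -> b = 0.
Proof.
move=> [Hin Hv] Hint.
have n0 : (0 < n)%N by apply: leq_trans hn.
have HS := int_nrm Hint.
pose p (j : 'I_m) k := b k 0 + A k j.
pose q (j : 'I_m) k := b k 0 - A k j.
have Hpq : forall j, nrm (p j) <= 1 /\ nrm (q j) <= 1 /\ \sum_k `|p j k + q j k| < 2.
  move=> j; have [H1 H2] := cols_of_hom j Hin; split => //; split => //.
  have -> : \sum_k `|p j k + q j k| = 2 * \sum_k `|b k 0|.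
    rewrite mulr_sumr; apply: eq_bigr => k _.
    by rewrite /p /q addrACA subrr addr0 -mulr2n normrMn mulr_natl.
  lra.
have Hcol : forall j, _ := fun j => col_ok (proj1 (Hpq j)) (proj1 (proj2 (Hpq j)))
                                    (proj2 (proj2 (Hpq j))).
pose ej j := eps_col (p j) (q j).
pose eps := \big[Num.min/1]_j ej j.
have eps0 : 0 < eps.
  apply: (big_ind (fun x => 0 < x)) => //.
    by move=> x y Hx Hy; rewrite lt_min Hx Hy.
  by move=> j _; case: (Hcol j).
have epsle : forall j, eps <= ej j.
  by move=> j; rewrite /eps (bigD1 j) //= ge_min lexx.
pose D := \matrix_(k, j) ((u_col (p j) (q j) k - v_col (p j) (q j) k) / 2) : 'M[R]_(n, m).
have Hgen : forall d, `|d| <= eps -> in_hom (A + d *: D) ((1 + d) *: b).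
  move=> d Hd; apply: hom_of_cols => // j.
  have [_ [Euv Hdd]] := Hcol j.
  have [H1 H2] := Hdd d (le_trans Hd (epsle j)).
  have Ev : forall k, v_col (p j) (q j) k = p j k + q j k - u_col (p j) (q j) k.
    by move=> k; rewrite -(Euv k) addrAC subrr add0r.
  split.
    apply: (le_trans _ H1); rewrite le_eqVlt; apply/orP; left; apply/eqP; apply: eq_bigr => k _.
    rewrite !mxE Ev /p /q; congr (`| _ |); by field.
  apply: (le_trans _ H2); rewrite le_eqVlt; apply/orP; left; apply/eqP; apply: eq_bigr => k _.
  rewrite !mxE Ev /p /q; congr (`| _ |); by field.
have Hin1' : in_hom (A + eps *: D) ((1 + eps) *: b).
  by apply: Hgen; rewrite ger0_norm // ltW.
have Hin2' : in_hom (A + (- eps) *: D) ((1 + - eps) *: b).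
  by apply: Hgen; rewrite normrN ger0_norm // ltW.
have [_ Eb] : A + eps *: D = A + (- eps) *: D /\ (1 + eps) *: b = (1 + - eps) *: b.
  apply: (Hv _ _ _ _ (1 / 2)) => //; first by lra.
  - by lra.
  - by apply/matrixP => i k; rewrite !mxE; field.
  - by apply/matrixP => i k; rewrite !mxE; field.
apply/matrixP => k l.
have := congr1 (fun M : 'cV[R]_n => M k l) Eb; rewrite !mxE => h.
have : eps * b k l = 0 by move: h; rewrite !mulrDl !mul1r mulNr; lra.
by move/eqP; rewrite mulf_eq0 (gt_eqF eps0) /= => /eqP.
Qed.
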